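(* Let $a,b,d\in\mathbb C$ with $a\notin\mathbb Z$ and $d\notin\{0,-1,-2,\dots\}$. Then, as an identity of formal power series in $x,y$, $$\mathrm H_3(a,b;d;x,y)=F(a,b;d;x)\,{}_0F_1(1-a;-y)+\sum_{k=1}^\infty\sum_{l=1}^k\frac{(-1)^{k+l}(k-1)!}{(l-1)!\,l!\,(k-l)!}\,\frac{(b)_k}{(1-a)_l(d)_k}\,x^ky^l\,F(a+k,b+k;d+k;x)\,{}_0F_1(1-a+l;-y).$$
   Context: Pochhammer symbol: $(\lambda)_k=\Gamma(\lambda+k)/\Gamma(\lambda)$ for every integer $k$ (possibly negative) whenever defined; $(\lambda)_0=1$. $F(a,b;c;x)=\sum_{k\ge0}\frac{(a)_k(b)_k}{(c)_k k!}x^k$, ${}_0F_1(c;x)=\sum_{k\ge0}\frac{x^k}{(c)_k k!}$. Confluent Horn function $\mathrm H_3(a,b;d;x,y)=\sum_{p,q\ge0}\frac{(a)_{p-q}(b)_p}{(d)_p\,p!\,q!}x^py^q$. All functions are regarded as formal power series in $x,y$; the infinite double sum converges in the formal (degree) topology. *)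

(* Defs.v *)
(* Formal power series in x,y over a field are coefficient
   functions nat -> nat -> R (coefficient of x^p y^q). *)
From HB Require Import structures.
From mathcomp Require Import all_boot all_order all_algebra.
Set Implicit Arguments. Unset Strict Implicit. Unset Printing Implicit Defensive.
Import Order.TTheory GRing.Theory Num.Theory.
Local Open Scope ring_scope.

Section Defs.
Variable R : fieldType.

Definition pochn (lam : R) (n : nat) : R := \prod_(i < n) (lam + i%:R).

(* Pochhammer (lambda)_k = Gamma(lambda+k)/Gamma(lambda) for k : int;
   for k = -(n+1): 1 / ((lambda-1)(lambda-2)...(lambda-n-1)) *)
Definition poch (lam : R) (k : int) : R :=
  match k with
  | Posz n => pochn lam n
  | Negz n => (\prod_(i < n.+1) (lam - (i.+1)%:R))^-1
  end.

Definition fps2 := nat -> nat -> R.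

Definition fadd (f g : fps2) : fps2 := fun p q => f p q + g p q.
Definition fscale (c : R) (f : fps2) : fps2 := fun p q => c * f p q.
Definition fmul (f g : fps2) : fps2 :=
  fun p q => \sum_(i < p.+1) \sum_(j < q.+1) f i j * g (p - i)%N (q - j)%N.
Definition fmono (k l : nat) : fps2 :=
  fun p q => if (p == k) && (q == l) then 1 else 0.
Definition xser (f : nat -> R) : fps2 := fun p q => if q == 0%N then f p else 0.
Definition yser (f : nat -> R) : fps2 := fun p q => if p == 0%N then f q else 0.
Definition yser_neg (f : nat -> R) : fps2 := yser (fun q => (-1) ^+ q * f q).

(* A family T : nat -> fps2 is summable in the degree (x-adic) sense used here
   when T k has no monomial x^p y^q with p < k; its sum is then
   coefficientwise the finite sum below. *)
Definition xsummable (T : nat -> fps2) : Prop :=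
  forall k p q, (p < k)%N -> T k p q = 0.
Definition fsum (T : nat -> fps2) : fps2 := fun p q => \sum_(k < p.+1) T k p q.

Definition F21 (a b c : R) : nat -> R :=
  fun k => pochn a k * pochn b k / (pochn c k * k`!%:R).
Definition F01 (c : R) : nat -> R := fun k => (pochn c k * k`!%:R)^-1.

Definition H3 (a b d : R) : fps2 :=
  fun p q => poch a (p%:Z - q%:Z) * pochn b p / (pochn d p * p`!%:R * q`!%:R).

End Defs.

(* Main.v *)
Require Import Defs.
From HB Require Import structures.
From mathcomp Require Import all_boot all_order all_algebra.
From mathcomp Require Import ring lra zify.
From Stdlib Require Import FunctionalExtensionality.
Import Order.TTheory GRing.Theory Num.Theory.
Local Open Scope ring_scope.

Lemma vsum m q : (\sum_(1 <= l < m.+2) 'C(m, l.-1) * 'C(q, l) = 'C(q + m, m.+1))%N.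
Proof.
rewrite big_add1 /= addnC -binomial.Vandermonde big_ord_recr /= bin_small // mul0n addn0.
rewrite big_mkord (reindex_inj rev_ord_inj) /=; apply: eq_bigr => i _.
rewrite bin_sub; last by rewrite -ltnS.
by congr (_ * _); congr 'C(_, _); have := ltn_ord i; lia.
Qed.

Section H.
Variable C : numClosedFieldType.

Lemma pochn_add (x : C) m n : pochn x (m + n) = pochn x m * pochn (x + m%:R) n.
Proof.
rewrite /pochn big_split_ord /=; congr (_ * _); apply: eq_bigr => i _.
by rewrite natrD addrA.
Qed.

Lemma pochnS (x : C) n : pochn x n.+1 = x * pochn (x + 1) n.
Proof. by rewrite -add1n pochn_add /pochn big_ord1 addr0. Qed.

Lemma pochnSr (x : C) n : pochn x n.+1 = pochn x n * (x + n%:R).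
Proof. by rewrite -addn1 pochn_add /pochn big_ord1 addr0. Qed.

Lemma pochn_neq0 (x : C) n : (forall i : nat, x + i%:R != 0) -> pochn x n != 0.
Proof. by move=> h; rewrite /pochn; apply/prodf_neq0 => i _; apply: h. Qed.

Lemma fact_neq0 n : (n`!%:R : C) != 0.
Proof. by rewrite pnatr_eq0 -lt0n fact_gt0. Qed.

Lemma natC_neq0 n : (0 < n)%N -> (n%:R : C) != 0.
Proof. by move=> h; rewrite pnatr_eq0 -lt0n. Qed.

Lemma chu p : forall (a q : C), (forall i : nat, a + i%:R != 0) ->
  \sum_(k < p.+1) (-1) ^+ k * 'C(p, k)%:R * pochn q k / pochn a k
  = pochn (a - q) p / pochn a p.
Proof.
elim: p => [|p IH] a q ha.
  by rewrite big_ord1 /pochn !big_ord0 !mulr1 divr1.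
have ha1 : forall i : nat, a + 1 + i%:R != 0.
  by move=> i; rewrite -addrA (addrC 1) natr1; apply: ha.
have ha0 : a != 0 by move: (ha 0%N); rewrite addr0.
rewrite big_ord_recl /=.
have -> : \sum_(i < p.+1) (-1) ^+ (bump 0 i) * 'C(p.+1, bump 0 i)%:R * pochn q (bump 0 i)
   / pochn a (bump 0 i) =
  \sum_(i < p.+1) (-1) ^+ i.+1 * 'C(p, i.+1)%:R * pochn q i.+1 / pochn a i.+1
  - q / a * \sum_(i < p.+1) (-1) ^+ i * 'C(p, i)%:R * pochn (q + 1) i / pochn (a + 1) i.
  rewrite mulr_sumr -sumrB; apply: eq_bigr => i _.
  rewrite /bump /= add1n binS natrD !pochnS exprS.
  field.
  by rewrite pochn_neq0 ?ha0.
rewrite (IH (a + 1) (q + 1) ha1) addrA.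
have -> : (-1) ^+ 0 * 'C(p.+1, 0)%:R * pochn q 0 / pochn a 0 +
   \sum_(i < p.+1) (-1) ^+ i.+1 * 'C(p, i.+1)%:R * pochn q i.+1 / pochn a i.+1
   = \sum_(k < p.+1) (-1) ^+ k * 'C(p, k)%:R * pochn q k / pochn a k.
  rewrite big_ord_recr /= (@bin_small p p.+1) // mulr0 mul0r mul0r addr0.
  rewrite [RHS]big_ord_recl /= !bin0; congr (_ + _).
rewrite IH //.
have e1 : a - q = a + 1 - (q + 1) by rewrite opprD addrACA subrr addr0.
rewrite -e1 (pochnSr (a - q)) (pochnS a).
have hp := pochn_neq0 (a + 1) p ha1.
have hpa : a + p%:R != 0 by apply: ha.
have -> : pochn a p = a * pochn (a + 1) p / (a + p%:R).
  by rewrite -pochnS pochnSr mulfK.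
field.
by rewrite hp hpa ha0.
Qed.
Lemma pochn_nat (q m : nat) :
  pochn (q%:R : C) m.+1 = ('C(q + m, m.+1) * (m.+1)`!)%:R.
Proof.
rewrite bin_ffact ffact_prod natr_prod /pochn (reindex_inj rev_ord_inj) /=.
apply: eq_bigr => i _; rewrite -natrD; congr _%:R; have := ltn_ord i; lia.
Qed.

Lemma rev_pochn (a : C) q : pochn (1 - a) q * (-1) ^+ q = pochn (a - q%:R) q.
Proof.
have -> : (-1) ^+ q = (-1) ^+ #|'I_q| :> C by rewrite card_ord.
rewrite /pochn (reindex_inj rev_ord_inj) /= mulrC -prodrN.
apply: eq_bigr => i _.
have hi := ltn_ord i.
have -> : (q - i.+1)%N = (q - 1 - i)%N by lia.
rewrite natrB; last by lia.
rewrite natrB; last by lia.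
ring.
Qed.
Lemma poch_split (a : C) p q : (forall i : nat, a != (i.+1)%:R) ->
  poch a (p%:Z - q%:Z) * pochn (a - q%:R) q = pochn (a - q%:R) p.
Proof.
move=> ha.
case: (leqP q p) => hqp.
  have -> : p%:Z - q%:Z = Posz (p - q)%N by lia.
  rewrite /= -{2}(subnKC hqp) pochn_add subrK mulrC //.
have -> : p%:Z - q%:Z = Negz (q - p).-1 by rewrite NegzE; lia.
rewrite /= prednK ?subn_gt0 //.
have -> : pochn (a - q%:R) q = pochn (a - q%:R) p * pochn (a - q%:R + p%:R) (q - p).
  by rewrite -pochn_add subnKC // ltnW.
have -> : pochn (a - q%:R + p%:R) (q - p) = \prod_(i < q - p) (a - (i.+1)%:R).
  rewrite /pochn (reindex_inj rev_ord_inj) /=; apply: eq_bigr => i _.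
  have hi := ltn_ord i.
  move: (nat_of_ord i) hi => j hj.
  have : ((q - p - j.+1) + p + j.+1 = q)%N by lia.
  move: (q - p - j.+1)%N => n <-; rewrite !natrD; ring.
rewrite [X in _ * X]mulrC mulKf //.
apply/prodf_neq0 => i _; rewrite subr_eq0; exact: ha.
Qed.

Lemma fmul_mono k l (h : fps2 C) p q :
  fmul (fmono C k l) h p q = if (k <= p)%N && (l <= q)%N then h (p - k)%N (q - l)%N else 0.
Proof.
rewrite /fmul /fmono.
case: ifP => [/andP [hk hl]|hkl].
  rewrite (bigD1 (Ordinal (leq_trans hk (leqnn p) : k < p.+1)%N)) //= [X in _ + X]big1; last first.
    move=> i /eqP hi; apply: big1 => j _.
    have -> : (i == k :> nat) = false by apply/negbTE/eqP => h'; apply: hi; apply: val_inj.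
    by rewrite mul0r.
  rewrite addr0 (bigD1 (Ordinal (hl : l < q.+1)%N)) //= [X in _ + X]big1; last first.
    move=> j /eqP hj.
    have -> : (j == l :> nat) = false by apply/negbTE/eqP => h'; apply: hj; apply: val_inj.
    by rewrite andbF mul0r.
  by rewrite !eqxx mul1r addr0.
apply: big1 => i _; apply: big1 => j _.
case: ifP => [/andP [/eqP hi /eqP hj]|]; last by rewrite mul0r.
exfalso; move: (ltn_ord i) (ltn_ord j); rewrite hi hj !ltnS => h1 h2.
by rewrite h1 h2 in hkl.
Qed.

Lemma fmul_xy (f g : nat -> C) k l p q :
  fmul (fmul (fmono C k l) (xser f)) (yser g) p q =
  if (k <= p)%N && (l <= q)%N then f (p - k)%N * g (q - l)%N else 0.
Proof.
rewrite {1}/fmul.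
under eq_bigr do under eq_bigr do rewrite fmul_mono.
case: ifP => [/andP [hk hl]|hkl].
  rewrite (bigD1 (@ord_max p)) //= [X in _ + X]big1; last first.
    move=> i /eqP hi; apply: big1 => j _.
    rewrite /yser.
    have -> : (p - i == 0)%N = false.
      apply/negbTE; rewrite subn_eq0 -ltnNge; have := ltn_ord i; rewrite ltnS leq_eqVlt.
      by case/orP => // /eqP h'; exfalso; apply: hi; apply: val_inj.
    by rewrite mulr0.
  rewrite addr0 (bigD1 (Ordinal (hl : l < q.+1)%N)) //= [X in _ + X]big1; last first.
    move=> j /eqP hj; rewrite /xser.
    case: ifP; last by rewrite mul0r.
    move=> /andP [_ hlj].
    have -> : (j - l == 0)%N = false.
      apply/negbTE; rewrite subn_eq0 -ltnNge ltn_neqAle hlj andbT.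
      by apply/eqP => h'; apply: hj; apply: val_inj.
    by rewrite mul0r.
  by rewrite hk leqnn addr0 subnn /xser /yser eqxx subnn eqxx.
apply: big1 => i _; apply: big1 => j _.
case: ifP => [/andP [hk hl]|]; last by rewrite mul0r.
rewrite /xser /yser.
case: eqP => [hj|]; last by rewrite mul0r.
case: eqP => [hi|]; last by rewrite mulr0.
exfalso; move: hkl (ltn_ord i) (ltn_ord j) hk hl hi hj; rewrite !ltnS.
move=> hkl hi' hj' hk hl hi hj.
have : (k <= p)%N && (l <= q)%N by apply/andP; split; lia.
by rewrite hkl.
Qed.
End H.
Section M.
Variable C : numClosedFieldType.
Lemma pochn_sh (x : C) n k : (forall i : nat, x + i%:R != 0) -> pochn (x + k%:R) n != 0.
Proof. move=> h; apply: pochn_neq0 => i; rewrite -addrA -natrD; exact: h. Qed.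

Lemma term_eq (a b d : C) (p q k l : nat) :
 (forall i:nat, a + i%:R != 0) -> (forall i:nat, 1 - a + i%:R != 0) -> (forall i:nat, d + i%:R != 0) ->
 (1 <= l)%N -> (l <= k)%N ->
 ((-1) ^+ (k + l) * (k.-1)`!%:R / ((l.-1)`!%:R * l`!%:R * (k - l)`!%:R)
  * pochn b k / (pochn (1 - a) l * pochn d k)) *
 (if (k <= p)%N && (l <= q)%N then F21 (a + k%:R) (b + k%:R) (d + k%:R) (p - k)%N * ((-1) ^+ (q - l) * F01 (1 - a + l%:R) (q - l)%N) else 0)
 = pochn b p * pochn a p * (-1) ^+ q / (pochn d p * pochn (1 - a) q * p`!%:R * q`!%:R)
   * ((-1) ^+ k * (p ^_ k)%:R / pochn a k * ('C(k.-1, l.-1) * 'C(q, l))%:R).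
Proof.
move=> ha ha1 hd hl hlk.
case: ifP => [/andP [hkp hlq] | hf]; last first.
  rewrite mulr0; move/negbT: hf; rewrite negb_and -!ltnNge => /orP [h|h].
    by rewrite ffact_small // !(mul0r, mulr0).
  by rewrite (bin_small h) muln0 !(mul0r, mulr0).
rewrite /F21 /F01.
have Ea : pochn a p = pochn a k * pochn (a + k%:R) (p - k) by rewrite -pochn_add subnKC.
have Eb : pochn b p = pochn b k * pochn (b + k%:R) (p - k) by rewrite -pochn_add subnKC.
have Ed : pochn d p = pochn d k * pochn (d + k%:R) (p - k) by rewrite -pochn_add subnKC.
have Ee : pochn (1 - a) q = pochn (1 - a) l * pochn (1 - a + l%:R) (q - l) by rewrite -pochn_add subnKC.
have Ep : p`!%:R = (p ^_ k)%:R * (p - k)`!%:R :> C by rewrite -natrM ffact_fact.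
have Eq : q`!%:R = ('C(q, l) * l`! * (q - l)`!)%:R :> C by rewrite -mulnA bin_fact.
have Ek : (k.-1)`!%:R = ('C(k.-1, l.-1) * (l.-1)`! * (k - l)`!)%:R :> C.
  have -> : (k - l = k.-1 - l.-1)%N by lia.
  by rewrite -mulnA bin_fact //; lia.
have Es : (-1) ^+ q = (-1) ^+ l * (-1) ^+ (q - l) :> C by rewrite -exprD subnKC.
rewrite Ea Eb Ed Ee Ep Eq Ek Es exprD !natrM.
have h1 : (p ^_ k)%:R != 0 :> C by apply: (@natC_neq0 C); rewrite ffact_gt0.
have h2 : ('C(q, l))%:R != 0 :> C by apply: (@natC_neq0 C); rewrite bin_gt0.
have h3 := @pochn_neq0 C a k ha.
have h4 := pochn_sh a (p - k) k ha.
have h5 := @pochn_neq0 C d k hd.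
have h6 := pochn_sh d (p - k) k hd.
have h7 := @pochn_neq0 C (1 - a) l ha1.
have h8 := pochn_sh (1 - a) (q - l) l ha1.
field.
by rewrite ?(@fact_neq0 C) ?h1 ?h2 ?h3 ?h4 ?h5 ?h6 ?h7 ?h8.
Qed.
End M.

Theorem mainTheorem6 (C : numClosedFieldType) (a b d : C)
  (ha : forall n : int, a != n%:~R)
  (hd : forall n : nat, d != - n%:R) :
  let T : nat -> fps2 C := fun k p q =>
    \sum_(1 <= l < k.+1)
      fscale ((-1) ^+ (k + l) * (k.-1)`!%:R / ((l.-1)`!%:R * l`!%:R * (k - l)`!%:R)
                * pochn b k / (pochn (1 - a) l * pochn d k))
        (fmul (fmul (fmono C k l) (xser (F21 (a + k%:R) (b + k%:R) (d + k%:R))))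
              (yser_neg (F01 (1 - a + l%:R)))) p q in
  xsummable T /\
  H3 a b d = fadd (fmul (xser (F21 a b d)) (yser_neg (F01 (1 - a)))) (fsum T).
Proof.
move=> T.
have ha0 : forall i : nat, a + i%:R != 0.
  move=> i; apply/negP => /eqP h; move: (ha (- i%:Z)); rewrite mulrNz.
  by rewrite -(subr0 a) -h opprD addrA subrr add0r eqxx.
have ha1 : forall i : nat, 1 - a + i%:R != 0.
  move=> i; apply/negP => /eqP h; move: (ha (i.+1%:Z)).
  have -> : a = i.+1%:R.
    have -> : a = 1 + i%:R - (1 - a + i%:R) by ring.
    by rewrite h subr0 addrC natr1.
  by rewrite eqxx.
have ha2 : forall i : nat, a != i.+1%:R by move=> i; exact: (ha (i.+1%:Z)).
have hd0 : forall i : nat, d + i%:R != 0.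
  move=> i; apply/negP => /eqP h; move: (hd i).
  by rewrite -(subr0 d) -h opprD addrA subrr add0r eqxx.
split.
  move=> k p q hpk; rewrite /T; apply: big1 => l _.
  rewrite /fscale /yser_neg fmul_xy.
  by rewrite leqNgt hpk mulr0.
apply: functional_extensionality => p; apply: functional_extensionality => q.
rewrite /fadd /fsum /T /fscale /yser_neg.
have -> : xser (F21 a b d) = fmul (fmono C 0 0) (xser (F21 a b d)).
  apply: functional_extensionality => i; apply: functional_extensionality => j.
  by rewrite fmul_mono !subn0.
rewrite fmul_xy /= !subn0.
under eq_bigr => k _ do under eq_big_nat => l /andP [hl hlk] do
  rewrite fmul_xy (@term_eq C a b d p q k l ha0 ha1 hd0 hl hlk).
have P0 : forall x : C, pochn x 0 = 1 by move=> x; rewrite /pochn big_ord0.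
have S : \sum_(k < p.+1) ((-1) ^+ k * (p ^_ k)%:R / pochn a k *
     (\sum_(1 <= l < k.+1) ('C(k.-1, l.-1) * 'C(q, l)))%:R)
   = pochn (a - q%:R) p / pochn a p - 1.
  rewrite -(@chu C p a q%:R ha0) big_ord_recl [in RHS]big_ord_recl /= big_geq // mulr0 add0r.
  rewrite expr0 bin0 !P0 mul1r divr1 mulr1 [RHS]addrAC subrr add0r.
  apply: eq_bigr => i _; rewrite /bump /= add1n add0n vsum -bin_ffact pochn_nat !natrM.
  by rewrite mulrAC [RHS]mulrAC; ring.
under eq_bigr => k _ do rewrite -mulr_sumr -mulr_sumr -natr_sum.
rewrite -mulr_sumr S.
rewrite /H3 /F21 /F01.
have E := @poch_split C a p q ha2.
have hs : (-1) ^+ q != 0 :> C by rewrite expf_neq0 // oppr_eq0 oner_eq0.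
have h1 := @pochn_neq0 C (1 - a) q ha1.
have h2 := @pochn_neq0 C a p ha0.
have h3 := @pochn_neq0 C d p hd0.
have -> : poch a (p%:Z - q%:Z) = pochn (a - q%:R) p / (pochn (1 - a) q * (-1) ^+ q).
  by rewrite rev_pochn -E mulfK // -rev_pochn mulf_neq0.
rewrite invfM invr_sign.
move: ((-1) ^+ q) hs => s hs.
field.
by rewrite ?(@fact_neq0 C) ?hs ?h1 ?h2 ?h3.
Qed.
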